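(* Let $X=C_1\cup C_2$ be the Alexandroff double circle. Then $X$ is a compact Hausdorff first-countable space, $C_1\in\mathsf{K}(X)$, but the Smyth power space $P_S(X)$ is not first-countable; in fact $C_1$ has no countable neighborhood base in $P_S(X)$.
   Context: In $\mathbb R^2$ let $C_i=\{(x,y): x^2+y^2=i\}$ for $i=1,2$, $X=C_1\cup C_2$, and let $p:C_1\to C_2$ be the radial projection from the origin. Topologize $X$ by neighborhood bases: for $z\in C_2$ the base is $\{\{z\}\}$; for $z\in C_1$ the base is $\{U_j(z): j\in\mathbb N\}$ with $U_j(z)=V_j\cup p(V_j\setminus\{z\})$, where $V_j$ is the arc of $C_1$ centered at $z$ of length $1/j$. $\mathsf{K}(X)$ is the set of nonempty compact saturated subsets of $X$ (for a $T_1$ space, all nonempty compact subsets). For open $U$, $\Box U=\{K\in\mathsf{K}(X):K\subseteq U\}$; the Smyth power space $P_S(X)$ is $\mathsf{K}(X)$ with the topology having base $\{\Box U: U\text{ open}\}$. *)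

(* Defs.v *)
From Stdlib Require Import Reals List.
Open Scope R_scope.

Definition subset {T : Type} (A B : T -> Prop) : Prop := forall x, A x -> B x.

Definition compact_set {T : Type} (O : (T -> Prop) -> Prop) (A : T -> Prop) : Prop :=
  forall F : (T -> Prop) -> Prop,
    (forall U, F U -> O U) ->
    (forall x, A x -> exists U, F U /\ U x) ->
    exists l : list (T -> Prop),
      (forall U, In U l -> F U) /\ (forall x, A x -> exists U, In U l /\ U x).

Definition hausdorff {T : Type} (S : T -> Prop) (O : (T -> Prop) -> Prop) : Prop :=
  forall x y, S x -> S y -> x <> y ->
    exists U V, O U /\ O V /\ U x /\ V y /\ (forall z, U z -> V z -> False).

Definition nbhd {T : Type} (S : T -> Prop) (O : (T -> Prop) -> Prop) (x : T)
  (N : T -> Prop) : Prop :=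
  subset N S /\ exists U, O U /\ U x /\ subset U N.

Definition countable_nbhd_base {T : Type} (S : T -> Prop) (O : (T -> Prop) -> Prop)
  (x : T) (B : nat -> T -> Prop) : Prop :=
  (forall n, nbhd S O x (B n)) /\
  (forall U, O U -> U x -> exists n, subset (B n) U).

Definition has_countable_nbhd_base {T : Type} (S : T -> Prop)
  (O : (T -> Prop) -> Prop) (x : T) : Prop :=
  exists B : nat -> T -> Prop, countable_nbhd_base S O x B.

Definition first_countable {T : Type} (S : T -> Prop) (O : (T -> Prop) -> Prop) : Prop :=
  forall x, S x -> has_countable_nbhd_base S O x.

Definition saturated {T : Type} (O : (T -> Prop) -> Prop) (A : T -> Prop) : Prop :=
  forall x, (forall U, O U -> subset A U -> U x) -> A x.

Definition KX {T : Type} (S : T -> Prop) (O : (T -> Prop) -> Prop) (K : T -> Prop) : Prop :=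
  subset K S /\ (exists x, K x) /\ compact_set O K /\ saturated O K.

Definition box {T : Type} (S : T -> Prop) (O : (T -> Prop) -> Prop) (U : T -> Prop)
  : (T -> Prop) -> Prop :=
  fun K => KX S O K /\ subset K U.

(** Open sets of the Smyth power space: the topology on K(X) with base
    { Box U | U open } (i.e. unions of basic sets). *)
Definition smyth_open {T : Type} (S : T -> Prop) (O : (T -> Prop) -> Prop)
  (W : (T -> Prop) -> Prop) : Prop :=
  forall K, W K -> exists U, O U /\ box S O U K /\ subset (box S O U) W.

Definition pt := (R * R)%type.

Definition Circ1 (z : pt) : Prop := fst z ^ 2 + snd z ^ 2 = 1.
Definition Circ2 (z : pt) : Prop := fst z ^ 2 + snd z ^ 2 = 2.
Definition Xset (z : pt) : Prop := Circ1 z \/ Circ2 z.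

Definition proj (z : pt) : pt := (sqrt 2 * fst z, sqrt 2 * snd z).

(** V_j(z): open arc of Circ1 centered at z of length 1/j (j >= 1; here j is
    represented as S j for j : nat), i.e. points of Circ1 at arc-distance
    < 1/(2j) from z. The arc distance between unit vectors z, w is acos(z.w). *)
Definition Varc (j : nat) (z : pt) (w : pt) : Prop :=
  Circ1 w /\ acos (fst z * fst w + snd z * snd w) < / (2 * INR (S j)).

Definition Unbhd (j : nat) (z : pt) (w : pt) : Prop :=
  Varc j z w \/ exists v, Varc j z v /\ v <> z /\ w = proj v.

(** Topology on X generated by the neighborhood bases:
    {{z}} for z in Circ2, {U_j(z) | j} for z in Circ1. *)
Definition X_open (U : pt -> Prop) : Prop :=
  subset U Xset /\
  forall z, U z -> (Circ2 z \/ (Circ1 z /\ exists j, subset (Unbhd j z) U)).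

Definition PS_carrier : (pt -> Prop) -> Prop := KX Xset X_open.
Definition PS_open : ((pt -> Prop) -> Prop) -> Prop := smyth_open Xset X_open.

(* Main.v *)
Require Import Defs.
From Stdlib Require Import Reals List Lra Lia Psatz ClassicalEpsilon Classical Cantor.
Open Scope R_scope.

Definition sqd (z w : pt) : R := (fst z - fst w)^2 + (snd z - snd w)^2.
Definition edist (z w : pt) : R := sqrt (sqd z w).
Definition theta (j : nat) : R := / (2 * INR (S j)).
Definition ee (j : nat) : R := 2 - 2 * cos (theta j).
Definition rr (j : nat) : R := sqrt (ee j).

Lemma d2_nonneg z w : 0 <= sqd z w.
Proof. unfold sqd; apply Rplus_le_le_0_compat; apply pow2_ge_0. Qed.

Lemma edist_nonneg z w : 0 <= edist z w.
Proof. apply sqrt_pos. Qed.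

Lemma edist_sym z w : edist z w = edist w z.
Proof. unfold edist, sqd; f_equal; ring. Qed.

Lemma edist_refl z : edist z z = 0.
Proof. unfold edist, sqd. replace ((fst z - fst z) ^ 2 + (snd z - snd z) ^ 2) with 0 by ring. apply sqrt_0. Qed.

Lemma edist_pos z w : z <> w -> 0 < edist z w.
Proof.
  intros H. unfold edist. apply sqrt_lt_R0.
  destruct z as [a b], w as [c d]; unfold sqd; simpl.
  destruct (Req_dec a c) as [->|Hac].
  - destruct (Req_dec b d) as [->|Hbd]. + exfalso; apply H; reflexivity.
    + assert (0 < (b-d)^2).
      { replace ((b-d)^2) with (Rsqr (b-d)) by (unfold Rsqr; ring). apply Rsqr_pos_lt. lra. }
      assert (0 <= (c-c)^2) by apply pow2_ge_0. lra.
  - assert (0 < (a-c)^2).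
    { replace ((a-c)^2) with (Rsqr (a-c)) by (unfold Rsqr; ring). apply Rsqr_pos_lt. lra. }
    assert (0 <= (b-d)^2) by apply pow2_ge_0. lra.
Qed.

Lemma edist_tri a b c : edist a c <= edist a b + edist b c.
Proof.
  unfold edist, sqd.
  set (x1 := fst a - fst b); set (x2 := snd a - snd b).
  set (y1 := fst b - fst c); set (y2 := snd b - snd c).
  replace (fst a - fst c) with (x1 + y1) by (unfold x1, y1; ring).
  replace (snd a - snd c) with (x2 + y2) by (unfold x2, y2; ring).
  replace (fst a - fst b) with x1 by reflexivity.
  set (s := sqrt (x1^2 + x2^2)); set (t := sqrt (y1^2+y2^2)).
  assert (Hs : 0 <= s) by apply sqrt_pos. assert (Ht : 0 <= t) by apply sqrt_pos.
  assert (Hs2 : s^2 = x1^2+x2^2) by (apply pow2_sqrt; nra).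
  assert (Ht2 : t^2 = y1^2+y2^2) by (apply pow2_sqrt; nra).
  assert (Hdot : x1*y1 + x2*y2 <= s*t).
  { assert (HL : (s*t)^2 - (x1*y1+x2*y2)^2 = (x1*y2 - x2*y1)^2).
    { replace ((s*t)^2) with (s^2 * t^2) by ring. rewrite Hs2, Ht2. ring. }
    assert (0 <= (x1*y2 - x2*y1)^2) by apply pow2_ge_0.
    assert (0 <= s*t) by nra. nra. }

  rewrite <- (sqrt_pow2 (s+t)) by lra.
  apply sqrt_le_1_alt. nra.
Qed.

Lemma INR_S_ge1 j : 1 <= INR (S j).
Proof. rewrite S_INR. assert (0 <= INR j) by apply pos_INR. lra. Qed.

Lemma theta_pos j : 0 < theta j.
Proof. unfold theta. assert (H := INR_S_ge1 j). apply Rinv_0_lt_compat. lra. Qed.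

Lemma theta_le j : theta j <= /2.
Proof. unfold theta. assert (H := INR_S_ge1 j). apply Rinv_le_contravar; lra. Qed.

Lemma theta_lt_PI j : theta j < PI.
Proof. assert (H := theta_le j). assert (H2 := PI2_1). lra. Qed.

Lemma cos_theta_lt1 j : cos (theta j) < 1.
Proof.
  rewrite <- cos_0. apply cos_decreasing_1; try lra.
  - assert (H := PI_RGT_0); lra.
  - assert (H := theta_pos j); lra.
  - assert (H := theta_lt_PI j); lra.
  - apply theta_pos.
Qed.

Lemma cos_lb a : -PI/2 <= a -> a <= PI/2 -> 1 - a^2/2 <= cos a.
Proof.
  intros H1 H2. destruct (cos_bound a 0 H1 H2) as [H _].
  replace (1 - a^2/2) with (cos_approx a (2*0+1)); [exact H|].
  unfold cos_approx, cos_term. simpl. field.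
Qed.

Lemma ee_pos j : 0 < ee j.
Proof. unfold ee. assert (H := cos_theta_lt1 j). lra. Qed.

Lemma ee_le j : ee j <= theta j ^ 2.
Proof.
  unfold ee. assert (H := cos_lb (theta j)).
  assert (H1 := theta_pos j). assert (H2 := theta_le j). assert (H3 := PI2_1).
  assert (1 - theta j ^2/2 <= cos (theta j)) by (apply H; lra). lra.
Qed.

Lemma rr_pos j : 0 < rr j.
Proof. unfold rr. apply sqrt_lt_R0, ee_pos. Qed.

Lemma rr_le j : rr j <= theta j.
Proof.
  unfold rr. rewrite <- (sqrt_pow2 (theta j)) by (apply Rlt_le, theta_pos).
  apply sqrt_le_1_alt. apply ee_le.
Qed.

Lemma rr_small eps : 0 < eps -> exists j, rr j < eps.
Proof.
  intros He. destruct (archimed_cor1 eps He) as [N [HN HN0]].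
  exists N. eapply Rle_lt_trans; [apply rr_le|]. eapply Rle_lt_trans; [|exact HN].
  unfold theta. assert (H : 0 < INR N) by (apply lt_0_INR; lia).
  rewrite S_INR. apply Rinv_le_contravar; lra.
Qed.

Lemma acos_lt_iff x t : -1 <= x <= 1 -> 0 <= t <= PI -> (acos x < t <-> cos t < x).
Proof.
  intros Hx Ht. destruct (acos_bound x) as [A1 A2]. split; intros H.
  - rewrite <- (cos_acos x Hx). apply cos_decreasing_1; lra.
  - destruct (Rlt_le_dec (acos x) t) as [|Hle]; [assumption|].
    exfalso. rewrite <- (cos_acos x Hx) in H.
    assert (cos (acos x) <= cos t) by (apply cos_decr_1; lra). lra.
Qed.

Lemma Varc_iff j z w : Circ1 z ->
  (Varc j z w <-> Circ1 w /\ edist z w < rr j).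
Proof.
  intros Hz. unfold Varc. split; intros [Hw H]; split; try assumption;
  destruct z as [a b], w as [c d]; unfold Circ1 in *; simpl in *.
  - assert (Hdot : -1 <= a*c+b*d <= 1).
    { assert (0 <= (a*d-b*c)^2) by apply pow2_ge_0. split; nra. }
    assert (Ht : 0 <= theta j <= PI) by (split; [apply Rlt_le, theta_pos| apply Rlt_le, theta_lt_PI]).
    apply (acos_lt_iff _ _ Hdot Ht) in H.
    unfold edist, rr, ee, sqd; simpl. apply sqrt_lt_1_alt. split.
    + apply Rplus_le_le_0_compat; apply pow2_ge_0.
    + nra.
  - assert (Hdot : -1 <= a*c+b*d <= 1).
    { assert (0 <= (a*d-b*c)^2) by apply pow2_ge_0. split; nra. }
    assert (Ht : 0 <= theta j <= PI) by (split; [apply Rlt_le, theta_pos| apply Rlt_le, theta_lt_PI]).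
    apply (acos_lt_iff _ _ Hdot Ht).
    unfold edist, rr, ee, sqd in H; simpl in H. apply sqrt_lt_0_alt in H. nra.
Qed.

Lemma sqrt2_pos : 0 < sqrt 2.
Proof. apply sqrt_lt_R0; lra. Qed.
Lemma sqrt2_sq : sqrt 2 * sqrt 2 = 2.
Proof. apply sqrt_sqrt; lra. Qed.

Lemma proj_circ2 v : Circ1 v -> Circ2 (proj v).
Proof.
  destruct v as [a b]; unfold Circ1, Circ2, proj; cbn [fst snd]. intros H.
  assert (E := sqrt2_sq).
  replace ((sqrt 2 * a)^2 + (sqrt 2 * b)^2) with ((sqrt 2 * sqrt 2) * (a^2+b^2)) by ring.
  rewrite E, H. ring.
Qed.

Lemma circ12 w : Circ1 w -> Circ2 w -> False.
Proof. unfold Circ1, Circ2; intros; lra. Qed.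

Definition unproj (w : pt) : pt := (fst w / sqrt 2, snd w / sqrt 2).

Lemma proj_unproj w : proj (unproj w) = w.
Proof.
  destruct w as [a b]; unfold proj, unproj; cbn [fst snd]. assert (H := sqrt2_pos).
  f_equal; field; lra.
Qed.

Lemma unproj_proj v : unproj (proj v) = v.
Proof.
  destruct v as [a b]; unfold proj, unproj; cbn [fst snd]. assert (H := sqrt2_pos).
  f_equal; field; lra.
Qed.

Lemma proj_inj v v' : proj v = proj v' -> v = v'.
Proof. intros H. rewrite <- (unproj_proj v), <- (unproj_proj v'), H. reflexivity. Qed.

Lemma unproj_circ1 w : Circ2 w -> Circ1 (unproj w).
Proof.
  destruct w as [a b]; unfold Circ1, Circ2, unproj; cbn [fst snd]. intros H.
  assert (E := sqrt2_sq). assert (P := sqrt2_pos).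
  replace ((a / sqrt 2)^2 + (b / sqrt 2)^2) with ((a^2+b^2) / (sqrt 2 * sqrt 2)) by (field; lra).
  rewrite E, H. field.
Qed.

Lemma Varc_circ1 j z w : Varc j z w -> Circ1 w.
Proof. intros [H _]; exact H. Qed.

Lemma Unbhd_sub j z : subset (Unbhd j z) Xset.
Proof.
  intros w [H|[v [Hv [_ ->]]]].
  - left. exact (Varc_circ1 _ _ _ H).
  - right. apply proj_circ2. exact (Varc_circ1 _ _ _ Hv).
Qed.

Lemma Varc_center j z : Circ1 z -> Varc j z z.
Proof. intros Hz. apply Varc_iff; auto. split; auto. rewrite edist_refl. apply rr_pos. Qed.

Lemma Unbhd_center j z : Circ1 z -> Unbhd j z z.
Proof. intros Hz. left. apply Varc_center; auto. Qed.

Lemma Varc_mono j k z w u : Circ1 z -> Circ1 w -> edist z w + rr k <= rr j ->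
  Varc k w u -> Varc j z u.
Proof.
  intros Hz Hw Hle Hu. apply Varc_iff in Hu; auto. destruct Hu as [Hu1 Hu2].
  apply Varc_iff; auto. split; auto.
  eapply Rle_lt_trans; [apply (edist_tri z w u)|]. lra.
Qed.

Lemma Unbhd_open j z : Circ1 z -> X_open (Unbhd j z).
Proof.
  intros Hz. split; [apply Unbhd_sub|].
  intros w [Hw|[v [Hv [Hvz ->]]]].
  - assert (Hw1 := Varc_circ1 _ _ _ Hw). right. split; auto.
    destruct (classic (w = z)) as [->|Hwz]; [exists j; intros u Hu; exact Hu|].
    apply Varc_iff in Hw; auto. destruct Hw as [_ Hd].
    assert (Hp := edist_pos _ _ Hwz).
    destruct (rr_small (Rmin (rr j - edist z w) (edist w z))) as [k Hk].
    { apply Rmin_glb_lt; [lra|]. exact Hp. }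
    assert (Hk1 : rr k < rr j - edist z w) by (eapply Rlt_le_trans; [exact Hk| apply Rmin_l]).
    assert (Hk2 : rr k < edist w z) by (eapply Rlt_le_trans; [exact Hk| apply Rmin_r]).
    exists k. intros u [Hu|[v [Hv [Hvw ->]]]].
    + left. apply (Varc_mono j k z w u); auto. lra.
    + right. exists v. split; [apply (Varc_mono j k z w v); auto; lra|]. split; auto.
      intros ->. apply Varc_iff in Hv; auto. lra.
  - left. apply proj_circ2. exact (Varc_circ1 _ _ _ Hv).
Qed.

Lemma avoid j0 z w : Circ1 z -> w <> z -> exists j, (j0 <= j)%nat /\ ~ Unbhd j z w.
Proof.
  intros Hz Hwz.
  assert (Hp := edist_pos _ _ (not_eq_sym Hwz)).
  assert (Hm : exists m, 0 < m /\ m <= edist z w /\ (unproj w <> z -> m <= edist z (unproj w))).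
  { destruct (classic (unproj w = z)) as [E|E].
    - exists (edist z w). split; auto. split; [lra|]. intros F; contradiction.
    - exists (Rmin (edist z w) (edist z (unproj w))). split.
      + apply Rmin_glb_lt; auto. apply edist_pos. auto.
      + split; [apply Rmin_l|]. intros _. apply Rmin_r. }
  destruct Hm as [m [Hm0 [Hm1 Hm2]]].
  destruct (rr_small m Hm0) as [k Hk].
  assert (Hmono : forall a b, (a <= b)%nat -> rr b <= rr a).
  { intros a b Hab. unfold rr. apply sqrt_le_1_alt. unfold ee.
    assert (cos (theta a) <= cos (theta b)); [|lra].
    apply cos_decr_1.
    - apply Rlt_le, theta_pos.
    - apply Rlt_le, theta_lt_PI.
    - apply Rlt_le, theta_pos.
    - apply Rlt_le, theta_lt_PI.
    - unfold theta. apply Rinv_le_contravar.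
      + assert (H := INR_S_ge1 a). lra.
      + apply Rmult_le_compat_l; [lra|]. apply le_INR. lia. }
  exists (Nat.max j0 k). split; [apply Nat.le_max_l|].
  assert (Hk' : rr (Nat.max j0 k) < m) by (eapply Rle_lt_trans; [apply (Hmono k); apply Nat.le_max_r| exact Hk]).
  intros [H|[v [Hv [Hvz E]]]].
  - apply Varc_iff in H; auto. lra.
  - assert (v = unproj w) by (rewrite E, unproj_proj; reflexivity). subst v.
    apply Varc_iff in Hv; auto. specialize (Hm2 Hvz). lra.
Qed.

Lemma Xset_open : X_open Xset.
Proof.
  split; [intros x H; exact H|].
  intros z [Hz|Hz]; [right; split; auto; exists O; apply Unbhd_sub | left; auto].
Qed.

Lemma Xminus_open x : X_open (fun w => Xset w /\ w <> x).
Proof.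
  split; [intros w [H _]; exact H|].
  intros z [[Hz|Hz] Hzx]; [right | left; auto].
  split; auto. destruct (avoid O z x Hz (not_eq_sym Hzx)) as [j [_ Hj]].
  exists j. intros u Hu. split; [exact (Unbhd_sub _ _ _ Hu)|]. intros ->. contradiction.
Qed.

Lemma singleton_open y : Circ2 y -> X_open (fun w => w = y).
Proof.
  intros Hy. split; [intros w ->; right; auto|]. intros z ->. left; auto.
Qed.

Definition cpt (t : R) : pt := (cos t, sin t).

Lemma cpt_circ1 t : Circ1 (cpt t).
Proof. unfold Circ1, cpt; cbn [fst snd]. assert (H := sin2_cos2 t). unfold Rsqr in H. lra. Qed.

Lemma angle_exists w : Circ1 w -> exists t, 0 <= t <= 2*PI /\ w = cpt t.
Proof.
  destruct w as [x y]; unfold Circ1, cpt; cbn [fst snd]; intros H.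
  assert (Hx : -1 <= x <= 1) by (split; nra).
  assert (E : 1 - x² = y^2) by (unfold Rsqr; lra).
  destruct (acos_bound x) as [A1 A2]. assert (P := PI_RGT_0).
  destruct (Rle_lt_dec 0 y) as [Hy|Hy].
  - exists (acos x). split; [lra|]. rewrite cos_acos by auto. rewrite sin_acos by auto.
    rewrite E, sqrt_pow2 by auto. reflexivity.
  - exists (2*PI - acos x). split; [lra|].
    rewrite cos_minus, sin_minus, cos_2PI, sin_2PI, cos_acos, sin_acos by auto.
    rewrite E. replace (y^2) with ((-y)^2) by ring. rewrite sqrt_pow2 by lra.
    f_equal; ring.
Qed.

Lemma cont_eps f : continuity f -> forall s eps, 0 < eps ->
  exists d, 0 < d /\ forall s', Rabs (s' - s) < d -> Rabs (f s' - f s) < eps.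
Proof.
  intros Hf s eps He. specialize (Hf s eps He). destruct Hf as [alp [Ha H]].
  exists alp. split; [exact Ha|]. intros s' Hs'.
  destruct (Req_dec s' s) as [->|Hne].
  - replace (f s - f s) with 0 by ring. rewrite Rabs_R0. exact He.
  - apply (H s'). split; [split; [exact I| auto] | exact Hs'].
Qed.

Lemma cpt_cont s eps : 0 < eps ->
  exists d, 0 < d /\ forall s', Rabs (s' - s) < d -> edist (cpt s) (cpt s') < eps.
Proof.
  intros He.
  destruct (cont_eps cos continuity_cos s (eps/2)) as [d1 [Hd1 H1]]; [lra|].
  destruct (cont_eps sin continuity_sin s (eps/2)) as [d2 [Hd2 H2]]; [lra|].
  exists (Rmin d1 d2). split; [apply Rmin_glb_lt; auto|].
  intros s' Hs'.
  assert (A := H1 s' (Rlt_le_trans _ _ _ Hs' (Rmin_l _ _))).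
  assert (B := H2 s' (Rlt_le_trans _ _ _ Hs' (Rmin_r _ _))).
  unfold edist, sqd, cpt; cbn [fst snd].
  rewrite <- (sqrt_pow2 eps) by lra. apply sqrt_lt_1_alt. split.
  - apply Rplus_le_le_0_compat; apply pow2_ge_0.
  - rewrite <- (pow2_abs (cos s - cos s')), <- (pow2_abs (sin s - sin s')).
    rewrite Rabs_minus_sym in A, B.
    assert (0 <= Rabs (cos s - cos s')) by apply Rabs_pos.
    assert (0 <= Rabs (sin s - sin s')) by apply Rabs_pos.
    nra.
Qed.

Lemma interval_compact (a b : R) (G : R -> R -> Prop) :
  (forall t, a <= t <= b -> G t t) ->
  (forall t s, G t s -> exists d, 0 < d /\ forall s', Rabs (s' - s) < d -> G t s') ->
  exists l, (forall t, In t l -> a <= t <= b) /\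
            forall s, a <= s <= b -> exists t, In t l /\ G t s.
Proof.
  intros Hc Ho.
  assert (cf : forall x, (exists y, (fun t s => (a <= t <= b) /\ G t s) x y) -> a <= x <= b).
  { intros x [y [H _]]; exact H. }
  set (f0 := mkfamily (fun t => a <= t <= b) (fun t s => (a <= t <= b) /\ G t s) cf).
  destruct (compact_P3 a b f0) as [D [Hcov [l Hl]]].
  - split.
    + intros x Hx. exists x. simpl. split; auto.
    + intros x s [Hx Hg]. destruct (Ho x s Hg) as [d [Hd Hd']].
      exists (mkposreal d Hd). intros s' Hs'. unfold disc in Hs'. simpl in Hs'.
      simpl. split; auto.
  - exists l. split.
    + intros t Ht. apply Hl in Ht. destruct Ht as [Ht _]. exact Ht.
    + intros s Hs. destruct (Hcov s Hs) as [y [[Hy Hg] HD]].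
      exists y. split; [apply Hl; split; auto| exact Hg].
Qed.

Lemma choice_fun {A B : Type} (P : A -> B -> Prop) :
  (forall a, exists b, P a b) -> exists f : A -> B, forall a, P a (f a).
Proof.
  intros H. exists (fun a => proj1_sig (constructive_indefinite_description _ (H a))).
  intros a. exact (proj2_sig (constructive_indefinite_description _ (H a))).
Qed.

Lemma circ1_cover (F : (pt -> Prop) -> Prop) :
  (forall U, F U -> X_open U) -> (forall x, Circ1 x -> exists U, F U /\ U x) ->
  exists l : list (pt * nat * (pt -> Prop)),
    (forall e, In e l -> Circ1 (fst (fst e)) /\ F (snd e) /\
                         subset (Unbhd (snd (fst e)) (fst (fst e))) (snd e)) /\
    forall w, Circ1 w -> exists e, In e l /\ Varc (snd (fst e)) (fst (fst e)) w.
Proof.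
  intros HO HC.
  assert (Hg : forall t, exists p : nat * (pt -> Prop),
             F (snd p) /\ subset (Unbhd (fst p) (cpt t)) (snd p)).
  { intros t. destruct (HC (cpt t) (cpt_circ1 t)) as [U [HU Ut]].
    destruct (HO U HU) as [_ H]. destruct (H _ Ut) as [H2|[_ [j Hj]]].
    - exfalso. exact (circ12 _ (cpt_circ1 t) H2).
    - exists (j, U). split; auto. }
  destruct (choice_fun _ Hg) as [g Hgp].
  destruct (interval_compact 0 (2*PI) (fun t s => Varc (fst (g t)) (cpt t) (cpt s)))
    as [lt [Hlt1 Hlt2]].
  - intros t _. apply Varc_center, cpt_circ1.
  - intros t s Hts. apply Varc_iff in Hts; [|apply cpt_circ1]. destruct Hts as [_ Hd].
    destruct (cpt_cont s (rr (fst (g t)) - edist (cpt t) (cpt s))) as [d [Hd0 Hd1]]; [lra|].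
    exists d. split; auto. intros s' Hs'. apply Varc_iff; [apply cpt_circ1|].
    split; [apply cpt_circ1|]. specialize (Hd1 s' Hs').
    eapply Rle_lt_trans; [apply (edist_tri _ (cpt s))|]. lra.
  - exists (map (fun t => (cpt t, fst (g t), snd (g t))) lt). split.
    + intros e He. apply in_map_iff in He. destruct He as [t [<- _]]. cbn [fst snd].
      split; [apply cpt_circ1|]. apply Hgp.
    + intros w Hw. destruct (angle_exists w Hw) as [s [Hs ->]].
      destruct (Hlt2 s Hs) as [t [Ht Hts]].
      exists (cpt t, fst (g t), snd (g t)). split; [apply in_map_iff; exists t; auto|].
      exact Hts.
Qed.

Fixpoint iv (b : nat -> R) (m : nat) : R * R :=
  match m with
  | O => (0, 1)
  | S m' => let p := iv b m' in
      if Rle_dec (b m') (fst p + (snd p - fst p)/2)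
      then (fst p + 2*(snd p - fst p)/3, snd p)
      else (fst p, fst p + (snd p - fst p)/3)
  end.

Lemma iv_lt b m : fst (iv b m) < snd (iv b m).
Proof.
  induction m; simpl; [lra|].
  destruct Rle_dec; cbn [fst snd]; lra.
Qed.

Lemma iv_step b m : fst (iv b m) <= fst (iv b (S m)) /\ snd (iv b (S m)) <= snd (iv b m)
  /\ (b m < fst (iv b (S m)) \/ snd (iv b (S m)) < b m).
Proof.
  assert (H := iv_lt b m). simpl. destruct Rle_dec; cbn [fst snd]; lra.
Qed.

Lemma iv_mono b m n : (m <= n)%nat -> fst (iv b m) <= fst (iv b n) /\ snd (iv b n) <= snd (iv b m).
Proof.
  induction 1; [lra|]. destruct (iv_step b m0) as [A [B _]]. lra.
Qed.

Lemma iv_le b m n : fst (iv b m) <= snd (iv b n).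
Proof.
  destruct (iv_mono b m (Nat.max m n) (Nat.le_max_l _ _)) as [A _].
  destruct (iv_mono b n (Nat.max m n) (Nat.le_max_r _ _)) as [_ B].
  assert (C := iv_lt b (Nat.max m n)). lra.
Qed.

Lemma avoid_seq (b : nat -> R) : exists u, 0 <= u <= 1 /\ forall m, u <> b m.
Proof.
  set (E := fun x => exists m, x = fst (iv b m)).
  destruct (completeness E) as [u [Hub Hlub]].
  - exists 1. intros x [m ->]. exact (iv_le b m O).
  - exists 0. exists O. reflexivity.
  - assert (Hlo : forall m, fst (iv b m) <= u) by (intros m; apply Hub; exists m; reflexivity).
    assert (Hhi : forall n, u <= snd (iv b n)).
    { intros n. apply Hlub. intros x [m ->]. apply iv_le. }
    exists u. split; [split; [exact (Hlo O) | exact (Hhi O)]|].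
    intros m E'. destruct (iv_step b m) as [_ [_ H]].
    specialize (Hlo (S m)); specialize (Hhi (S m)). lra.
Qed.

Lemma avoid_lists (L : nat -> list R) : exists u, 0 <= u <= 1 /\ forall n, ~ In u (L n).
Proof.
  destruct (avoid_seq (fun m => nth (snd (of_nat m)) (L (fst (of_nat m))) 2)) as [u [Hu Hm]].
  exists u. split; auto. intros n Hin.
  destruct (In_nth (L n) u 2 Hin) as [k [_ Hk]].
  apply (Hm (to_nat (n, k))). rewrite cancel_of_to. cbn [fst snd]. auto.
Qed.

Lemma compact_X : compact_set X_open Xset.
Proof.
  intros F HO HC.
  destruct (circ1_cover F HO (fun x Hx => HC x (or_introl Hx))) as [l [Hl1 Hl2]].
  assert (HV : forall w, exists V, Xset w -> F V /\ V w).
  { intros w. destruct (classic (Xset w)) as [Hw|Hw].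
    - destruct (HC w Hw) as [V HV]. exists V. auto.
    - exists (fun _ => False). intros; contradiction. }
  destruct (choice_fun _ HV) as [V HVp].
  exists (map snd l ++ map (fun e => V (proj (fst (fst e)))) l). split.
  - intros U HU. apply in_app_or in HU. destruct HU as [HU|HU];
      apply in_map_iff in HU; destruct HU as [e [<- He]].
    + apply (Hl1 e He).
    + apply HVp. right. apply proj_circ2. apply (Hl1 e He).
  - intros w [Hw|Hw].
    + destruct (Hl2 w Hw) as [e [He Hv]]. exists (snd e). split.
      * apply in_or_app; left; apply in_map; auto.
      * apply (Hl1 e He). left. exact Hv.
    + destruct (Hl2 (unproj w) (unproj_circ1 w Hw)) as [e [He Hv]].
      destruct (classic (unproj w = fst (fst e))) as [E|E].
      * exists (V (proj (fst (fst e)))). split.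
        -- apply in_or_app; right; apply (in_map (fun e => V (proj (fst (fst e))))); auto.
        -- rewrite <- E, proj_unproj. apply HVp. right; auto.
      * exists (snd e). split.
        -- apply in_or_app; left; apply in_map; auto.
        -- apply (Hl1 e He). right. exists (unproj w). split; auto. split; auto.
           rewrite proj_unproj; reflexivity.
Qed.

Lemma compact_K y : Xset y -> compact_set X_open (fun w => Circ1 w \/ w = y).
Proof.
  intros Hy F HO HC.
  destruct (circ1_cover F HO (fun x Hx => HC x (or_introl Hx))) as [l [Hl1 Hl2]].
  destruct (HC y (or_intror eq_refl)) as [Vy [HVy1 HVy2]].
  exists (Vy :: map snd l). split.
  - intros U [<-|HU]; auto. apply in_map_iff in HU; destruct HU as [e [<- He]]. apply (Hl1 e He).
  - intros w [Hw| ->].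
    + destruct (Hl2 w Hw) as [e [He Hv]]. exists (snd e). split.
      * right; apply in_map; auto.
      * apply (Hl1 e He). left. exact Hv.
    + exists Vy. split; [left; auto| auto].
Qed.

Lemma compact_C1 : compact_set X_open Circ1.
Proof.
  intros F HO HC.
  destruct (circ1_cover F HO HC) as [l [Hl1 Hl2]].
  exists (map snd l). split.
  - intros U HU. apply in_map_iff in HU; destruct HU as [e [<- He]]. apply (Hl1 e He).
  - intros w Hw. destruct (Hl2 w Hw) as [e [He Hv]]. exists (snd e). split.
    + apply in_map; auto.
    + apply (Hl1 e He). left. exact Hv.
Qed.

Lemma sat_all K : subset K Xset -> saturated X_open K.
Proof.
  intros HK x H. destruct (classic (K x)) as [|HKx]; auto.
  destruct (classic (Xset x)) as [Hx|Hx].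
  - exfalso. destruct (H _ (Xminus_open x)) as [_ E]; [|apply E; reflexivity].
    intros w Hw. split; auto. intros ->. contradiction.
  - exfalso. apply Hx. apply H; [apply Xset_open| exact HK].
Qed.

Lemma pt10 : Circ1 (1, 0).
Proof. unfold Circ1; cbn [fst snd]; ring. Qed.

Lemma KX_C1 : PS_carrier Circ1.
Proof.
  split; [intros w Hw; left; auto|]. split; [exists (1,0); apply pt10|].
  split; [apply compact_C1|]. apply sat_all. intros w Hw; left; auto.
Qed.

Lemma KX_K y : Xset y -> KX Xset X_open (fun w => Circ1 w \/ w = y).
Proof.
  intros Hy. assert (Hs : subset (fun w => Circ1 w \/ w = y) Xset).
  { intros w [Hw| ->]; [left|]; auto. }
  split; [exact Hs|]. split; [exists y; right; auto|].
  split; [apply compact_K; auto|]. apply sat_all; auto.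
Qed.

Lemma sep1 x y : Circ1 x -> Xset y -> x <> y ->
  exists U V, X_open U /\ X_open V /\ U x /\ V y /\ (forall z, U z -> V z -> False).
Proof.
  intros Hx [Hy|Hy] Hxy.
  - destruct (rr_small (edist x y / 2)) as [k Hk].
    { assert (H := edist_pos _ _ Hxy). lra. }
    exists (Unbhd k x), (Unbhd k y). split; [apply Unbhd_open; auto|].
    split; [apply Unbhd_open; auto|]. split; [apply Unbhd_center; auto|].
    split; [apply Unbhd_center; auto|].
    assert (Hc : forall z, Varc k x z -> Varc k y z -> False).
    { intros z H1 H2. apply Varc_iff in H1; auto. apply Varc_iff in H2; auto.
      destruct H1 as [_ H1]; destruct H2 as [_ H2].
      assert (T := edist_tri x z y). rewrite (edist_sym z y) in T. lra. }
    intros z [H1|[v [H1 [_ E1]]]] [H2|[v' [H2 [_ E2]]]].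
    + exact (Hc z H1 H2).
    + subst z. exact (circ12 _ (Varc_circ1 _ _ _ H1) (proj_circ2 _ (Varc_circ1 _ _ _ H2))).
    + subst z. exact (circ12 _ (Varc_circ1 _ _ _ H2) (proj_circ2 _ (Varc_circ1 _ _ _ H1))).
    + subst z. apply proj_inj in E2. subst v'. exact (Hc v H1 H2).
  - destruct (avoid O x y Hx (not_eq_sym Hxy)) as [j [_ Hj]].
    exists (Unbhd j x), (fun w => w = y). split; [apply Unbhd_open; auto|].
    split; [apply singleton_open; auto|]. split; [apply Unbhd_center; auto|].
    split; [reflexivity|]. intros z Hz ->. contradiction.
Qed.

Lemma hausdorff_X : hausdorff Xset X_open.
Proof.
  intros x y Hx Hy Hxy. destruct Hx as [Hx|Hx].
  - apply sep1; auto.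
  - destruct Hy as [Hy|Hy].
    + destruct (sep1 y x Hy (or_intror Hx) (not_eq_sym Hxy)) as [U [V [A [B [C [D E]]]]]].
      exists V, U. split; [auto|]. split; [auto|]. split; [auto|]. split; [auto|]. intros z H1 H2; exact (E z H2 H1).
    + exists (fun w => w = x), (fun w => w = y).
      split; [apply singleton_open; auto|]. split; [apply singleton_open; auto|].
      split; [reflexivity|]. split; [reflexivity|]. intros z -> ->. auto.
Qed.

Lemma fc_X : first_countable Xset X_open.
Proof.
  intros x [Hx|Hx].
  - exists (fun n => Unbhd n x). split.
    + intros n. split; [apply Unbhd_sub|]. exists (Unbhd n x).
      split; [apply Unbhd_open; auto|]. split; [apply Unbhd_center; auto| intros w Hw; exact Hw].
    + intros U HU Ux. destruct HU as [_ H]. destruct (H x Ux) as [H2|[_ [j Hj]]].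
      * exfalso; exact (circ12 _ Hx H2).
      * exists j. exact Hj.
  - exists (fun _ => fun w => w = x). split.
    + intros n. split; [intros w ->; right; auto|]. exists (fun w => w = x).
      split; [apply singleton_open; auto|]. split; [reflexivity| intros w Hw; exact Hw].
    + intros U HU Ux. exists O. intros w ->. exact Ux.
Qed.

Lemma bad_finite U : X_open U -> subset Circ1 U ->
  exists l : list pt, forall y, Circ2 y -> ~ U y -> In y l.
Proof.
  intros HU HC.
  set (F := fun V : pt -> Prop => V = U \/ exists y, Circ2 y /\ V = (fun w => w = y)).
  destruct (compact_X F) as [lv [Hlv1 Hlv2]].
  - intros V [->|[y [Hy ->]]]; [exact HU| apply singleton_open; auto].
  - intros w [Hw|Hw].
    + exists U. split; [left; auto| apply HC; auto].
    + exists (fun z => z = w). split; [right; exists w; auto| reflexivity].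
  - assert (Hp : forall V : pt -> Prop, exists p, (exists w, V w) -> V p).
    { intros V. destruct (classic (exists w, V w)) as [[w Hw]|N].
      - exists w. auto.
      - exists (0,0). intros H; contradiction. }
    destruct (choice_fun _ Hp) as [pick Hpick].
    exists (map pick lv). intros y Hy Hny.
    destruct (Hlv2 y (or_intror Hy)) as [V [HV Vy]].
    assert (FV := Hlv1 V HV). destruct FV as [->|[y' [Hy' ->]]]; [contradiction|].
    subst y'. assert (E : pick (fun w => w = y) = y) by (apply Hpick; exists y; reflexivity).
    rewrite <- E. apply in_map. exact HV.
Qed.

Theorem not_base : ~ has_countable_nbhd_base PS_carrier PS_open Circ1.
Proof.
  intros [B [HB1 HB2]].
  assert (HU : forall n, exists U, X_open U /\ subset Circ1 U /\ subset (box Xset X_open U) (B n)).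
  { intros n. destruct (HB1 n) as [_ [W [HW [WC HWB]]]].
    destruct (HW Circ1 WC) as [U [HUo [[_ HCU] HUW]]].
    exists U. split; auto. split; auto. intros K HK. apply HWB, HUW, HK. }
  destruct (choice_fun _ HU) as [Uf HUf].
  assert (HL : forall n, exists l : list pt, forall y, Circ2 y -> ~ Uf n y -> In y l).
  { intros n. destruct (HUf n) as [A [B' _]]. apply bad_finite; auto. }
  destruct (choice_fun _ HL) as [Lf HLf].
  destruct (avoid_lists (fun n => map fst (Lf n))) as [u [Hu Hnin]].
  set (y := (u, sqrt (2 - u^2))).
  assert (Hy : Circ2 y).
  { unfold Circ2, y; cbn [fst snd]. rewrite pow2_sqrt by nra. ring. }
  assert (HyU : forall n, Uf n y).
  { intros n. destruct (classic (Uf n y)) as [|N]; auto. exfalso.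
    apply (Hnin n). change u with (fst y). apply in_map. apply HLf; auto. }
  set (U := fun w => Xset w /\ w <> y).
  assert (HUo : X_open U) by apply Xminus_open.
  assert (HCU : subset Circ1 U).
  { intros w Hw. split; [left; auto|]. intros ->. exact (circ12 _ Hw Hy). }
  destruct (HB2 (box Xset X_open U)) as [n Hn].
  - intros K HK. exists U. split; auto. split; auto. intros K' HK'; exact HK'.
  - split; [apply KX_C1| exact HCU].
  - set (K := fun w => Circ1 w \/ w = y).
    assert (HK : box Xset X_open (Uf n) K).
    { split; [apply KX_K; right; auto|]. intros w [Hw| ->].
      - destruct (HUf n) as [_ [A _]]. apply A; auto.
      - apply HyU. }
    destruct (HUf n) as [_ [_ A]].
    destruct (Hn K (A K HK)) as [_ HKU].
    destruct (HKU y (or_intror eq_refl)) as [_ E]. apply E; reflexivity.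
Qed.

Theorem mainTheorem4 :
  compact_set X_open Xset /\
  hausdorff Xset X_open /\
  first_countable Xset X_open /\
  PS_carrier Circ1 /\
  ~ first_countable PS_carrier PS_open /\
  ~ has_countable_nbhd_base PS_carrier PS_open Circ1.
Proof.
  split; [apply compact_X|]. split; [apply hausdorff_X|]. split; [apply fc_X|].
  split; [apply KX_C1|]. split; [|apply not_base].
  intros H. apply not_base. apply H. apply KX_C1.
Qed.
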